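(* For $n\ge0$ let $Q_n^L(x)=\sum_{r=0}^{n}\left[\binom{n}{r}\sum_{\ell=0}^{r}\binom{r}{\ell}\frac{1}{\ell!}\right](-x)^r$ (the coefficient polynomials of the linear transformation $x^n\mapsto L_n(x)$). Then for every $n$, all roots of $Q_n^L$ are real and lie in the open interval $(0,1)$, and the roots of $Q_n^L$ and $Q_{n+1}^L$ strictly interlace.
   Context: $L_n(x)=\sum_{k=0}^n\binom{n}{k}\frac{(-x)^k}{k!}$ is the $n$th Laguerre polynomial. Strict interlacing of the roots of a degree-$n$ polynomial and a degree-$(n+1)$ polynomial means their roots $s_1<\dots<s_{n+1}$ and $r_1<\dots<r_n$ are simple and satisfy $s_1<r_1<s_2<r_2<\cdots<r_n<s_{n+1}$. *)

(* Defs.v *)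
(* Polynomials over algC (algebraic complex numbers), which
   contain all complex roots of rational-coefficient polynomials. *)
From HB Require Import structures.
From mathcomp Require Import all_boot all_order all_algebra all_field.
Set Implicit Arguments. Unset Strict Implicit. Unset Printing Implicit Defensive.
Import Order.TTheory GRing.Theory Num.Theory.
Local Open Scope ring_scope.

Definition QL (n : nat) : {poly algC} :=
  \poly_(r < n.+1)
    (('C(n, r))%:R * (\sum_(l < r.+1) ('C(r, l))%:R / (l`!)%:R) * (-1) ^+ r).

(* Main.v *)
Require Import Defs.
From HB Require Import structures.
From mathcomp Require Import all_boot all_order all_algebra all_field.
From mathcomp Require Import zify ring lra.
Import Order.TTheory GRing.Theory Num.Theory.
Local Open Scope ring_scope.
Set Implicit Arguments. Unset Strict Implicit. Unset Printing Implicit Defensive.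

Lemma sum_widen (V : nmodType) m M (g : nat -> V) : (m <= M)%N ->
  (forall l, (m <= l)%N -> g l = 0) -> \sum_(l < m) g l = \sum_(l < M) g l.
Proof.
move=> mM g0; rewrite -!(big_mkord xpredT) (big_cat_nat (leq0n m) mM) /=.
rewrite [X in _ + X]big1_seq ?addr0 // => i /andP[_]; rewrite mem_iota => /andP[hi _].
exact: g0.
Qed.

Lemma bin_mul_id n l i : ('C(n, l + i) * 'C(l + i, l) = 'C(n, l) * 'C(n - l, i))%N.
Proof.
case: (leqP (l + i) n) => h; last first.
  rewrite (bin_small h) mul0n; case: (leqP l n) => hl.
    by rewrite (@bin_small (n - l) i) ?muln0 //; lia.
  by rewrite (bin_small hl).
have K : (0 < l`! * i`! * (n - l - i)`!)%N by rewrite !muln_gt0 !fact_gt0.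
apply/eqP; rewrite -(eqn_pmul2r K); apply/eqP.
have e1 := bin_fact h. have e2 := @bin_fact (l + i) l (leq_addr _ _).
have e3 := @bin_fact (n - l) i ltac:(lia). have e4 := @bin_fact n l ltac:(lia).
rewrite addKn in e2. have E : (n - l - i = n - (l + i))%N by lia.
rewrite E in e3 *.
transitivity n`!; first by rewrite -e1 -e2; ring.
by rewrite -e4 -e3; ring.
Qed.

Lemma binom_sum (V : comPzRingType) (y : V) n l :
  \sum_(r < n.+1) y ^+ r *+ ('C(n, r) * 'C(r, l)) = y ^+ l * (1 + y) ^+ (n - l) *+ 'C(n, l).
Proof.
case: (leqP l n) => hl; last first.
  rewrite bin_small // mulr0n big1 // => r _; rewrite (@bin_small r l) ?muln0 ?mulr0n //.
  by have := ltn_ord r; lia.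
rewrite exprDn mulr_sumr -sumrMnl.
rewrite -(big_mkord xpredT (fun r => y ^+ r *+ ('C(n, r) * 'C(r, l)))) (big_cat_nat (leq0n l) (leqW hl)) /=.
rewrite big1_seq ?add0r; last first.
  by move=> i; rewrite mem_iota /= subn0 add0n => hi; rewrite (@bin_small i l) ?muln0 ?mulr0n.
rewrite -{1}(add0n l) big_addn big_mkord; have -> : (n.+1 - l = (n - l).+1)%N by lia.
apply: eq_bigr => i _; rewrite expr1n mul1r mulrnAr -mulrnA -exprD (addnC l i) (addnC i l) bin_mul_id mulnC.
done.
Qed.

Lemma nat_rec_id n k :
  ((n.+2) * 'C(n.+2, k.+1) + n.+1 * 'C(n, k.+1) =
   (2 * n + 3) * 'C(n.+1, k.+1) + k.+1 * 'C(n.+1, k))%N.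
Proof.
have F1 := mul_bin_left n.+1 k.
have F2 := mul_bin_down n.+1 k.+1. rewrite /= in F2.
have F3 := binS n.+1 k.
case: (leqP k n) => hk.
  nia.
have hb : 'C(n, k.+1) = 0%N by rewrite bin_small //; lia.
have hc : 'C(n.+1, k.+1) = 0%N by rewrite bin_small //; lia.
rewrite hb hc in F1 F2 F3 *.
case: (ltnP n.+1 k) => hk2.
  by rewrite (bin_small hk2) in F3 *; rewrite F3; lia.
have E : k = n.+1 by lia.
rewrite E in F3 *; rewrite F3 binn; lia.
Qed.

Section Alg.
Variable R : numFieldType.

Definition cc (m k : nat) : R := ('C(m, k))%:R * (-1) ^+ k / (k`!)%:R.
Lemma cc_rec n k : (n.+2)%:R * cc n.+2 k =
  (2 * n + 3)%:R * cc n.+1 k - (if k is k'.+1 then cc n.+1 k' else 0)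
  - (n.+1)%:R * cc n k.
Proof.
case: k => [|k].
  rewrite /cc !bin0 expr0 fact0 !mulr1 divr1 subr0.
  rewrite -[n.+2]addn2 -[n.+1]addn1 !natrD; ring.
have key : ((n.+2)%:R * ('C(n.+2, k.+1))%:R : R) =
  (2 * n + 3)%:R * ('C(n.+1, k.+1))%:R + (k.+1)%:R * ('C(n.+1, k))%:R
  - (n.+1)%:R * ('C(n, k.+1))%:R.
  apply/eqP; rewrite eq_sym subr_eq; apply/eqP.
  by rewrite -!natrM -!natrD nat_rec_id.
rewrite /cc !mulrA key factS natrM exprS.
have h1 : (k`!)%:R != 0 :> R by rewrite pnatr_eq0 -lt0n fact_gt0.
have h2 : (k.+1)%:R != 0 :> R by rewrite pnatr_eq0.
field.
by rewrite h1 nat1r h2.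
Qed.

Definition HH (n : nat) : {poly R} :=
  \sum_(k < n.+1) cc n k *: ('X ^+ k * (1 - 'X) ^+ (n - k)).
Definition QLg (n : nat) : {poly R} :=
  \poly_(r < n.+1)
    (('C(n, r))%:R * (\sum_(l < r.+1) ('C(r, l))%:R / (l`!)%:R) * (-1) ^+ r).

Lemma HH_QL n : HH n = QLg n.
Proof.
rewrite /HH /QLg poly_def.
transitivity (\sum_(l < n.+1) \sum_(r < n.+1)
   (((l`!)%:R)^-1 * ('C(n, r) * 'C(r, l))%:R * (-1) ^+ r) *: ('X ^+ r : {poly R})).
  apply: eq_bigr => l _.
  transitivity ((((l`!)%:R)^-1)%:P * ((- 'X) ^+ l * (1 + - 'X) ^+ (n - l) *+ 'C(n, l)) : {poly R}).
    rewrite /cc -mul_polyC !polyCM !rmorphXn /= rmorphN1 !polyC_natr (exprNn ('X : {poly R})).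
    ring.
  rewrite -binom_sum mulr_sumr; apply: eq_bigr => r _.
  rewrite -mul_polyC !polyCM !rmorphXn /= rmorphN1 !polyC_natr exprNn.
  by rewrite -mulr_natr; ring.
rewrite exchange_big /=; apply: eq_bigr => r _.
rewrite -scaler_suml; congr (_ *: _).
rewrite (@sum_widen _ r.+1 n.+1 (fun l => ('C(r, l))%:R / (l`!)%:R)); last 2 first.
- exact: ltn_ord.
- by move=> l hl; rewrite bin_small // mul0r.
rewrite mulr_sumr mulr_suml; apply: eq_bigr => l _.
rewrite natrM; ring.
Qed.

Lemma cc_small m k : (m < k)%N -> cc m k = 0.
Proof. by move=> h; rewrite /cc bin_small // !mul0r. Qed.

Lemma HH_rec n : (n.+2)%:R *: HH n.+2 =
  ((2 * n + 3)%:R *: (1 - 'X) - 'X) * HH n.+1 - (n.+1)%:R *: ((1 - 'X) ^+ 2 * HH n).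
Proof.
set z := (1 - 'X : {poly R}).
pose T k := ('X ^+ k * z ^+ (n.+2 - k) : {poly R}).
have hA : ((2 * n + 3)%:R *: z) * HH n.+1 =
    \sum_(k < n.+3) ((2 * n + 3)%:R * cc n.+1 k) *: T k.
  rewrite /HH mulr_sumr.
  transitivity (\sum_(k < n.+2) ((2 * n + 3)%:R * cc n.+1 k) *: T k).
    apply: eq_bigr => k _; rewrite -scalerAl -scalerAr scalerA; congr (_ *: _).
    rewrite /T mulrCA -exprS; congr (_ * _ ^+ _); have := ltn_ord k; lia.
  rewrite (@sum_widen _ n.+2 n.+3 (fun k => ((2 * n + 3)%:R * cc n.+1 k) *: T k)) => // k hk.
  by rewrite cc_small ?mulr0 ?scale0r.
have hB : 'X * HH n.+1 =
    \sum_(k < n.+3) (if nat_of_ord k is k'.+1 then cc n.+1 k' else 0) *: T k.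
  rewrite big_ord_recl /= scale0r add0r /HH mulr_sumr.
  apply: eq_bigr => k _; rewrite /T -scalerAr; congr (_ *: _).
  by rewrite /bump /= add1n subSS mulrA -exprS.
have hC : (n.+1)%:R *: (z ^+ 2 * HH n) =
    \sum_(k < n.+3) ((n.+1)%:R * cc n k) *: T k.
  rewrite /HH mulr_sumr scaler_sumr.
  transitivity (\sum_(k < n.+1) ((n.+1)%:R * cc n k) *: T k).
    apply: eq_bigr => k _; rewrite -scalerAr scalerA; congr (_ *: _).
    rewrite /T mulrCA -exprD; congr (_ * _ ^+ _).
    have := ltn_ord k; lia.
  rewrite (@sum_widen _ n.+1 n.+3 (fun k => ((n.+1)%:R * cc n k) *: T k)); [by [] | lia | move=> k hk].
  by rewrite cc_small ?mulr0 ?scale0r.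
rewrite mulrBl hA hB hC /HH scaler_sumr -!sumrB; apply: eq_bigr => k _.
rewrite scalerA -!scalerBl cc_rec; congr (_ *: _).
Qed.

Lemma cc0 m : cc m 0 = 1.
Proof. by rewrite /cc bin0 expr0 fact0 !mulr1 divr1. Qed.

Lemma HH0 : HH 0 = 1.
Proof. by rewrite /HH big_ord1 /= cc0 scale1r !expr0 mulr1. Qed.

Lemma HH1 : HH 1 = 1 - 2%:R *: 'X.
Proof.
rewrite /HH big_ord_recr big_ord1 /= cc0 scale1r expr0 mul1r subn0 expr1.
rewrite /cc bin1 /= divr1 expr1 subnn expr0 mul1r scaleN1r expr1.
by rewrite mulr1 scaler_nat mulr2n opprD addrA.
Qed.

Lemma HH_rec_all n : (n.+1)%:R *: HH n.+1 =
  (((2 * n).+1)%:R *: (1 - 'X) - 'X) * HH n - n%:R *: ((1 - 'X) ^+ 2 * HH n.-1).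
Proof.
case: n => [|m].
  rewrite HH1 HH0 scale1r mulr1 scale0r subr0 muln0 scale1r.
  by rewrite scaler_nat mulr2n opprD addrA.
rewrite HH_rec /=; have -> : (2 * m + 3 = (2 * m.+1).+1)%N by lia.
by [].
Qed.

Lemma hornerT (c x : R) k m :
  (c *: ('X ^+ k * (1 - 'X) ^+ m)).[x] = c * (x ^+ k * (1 - x) ^+ m).
Proof. by rewrite hornerZ hornerM hornerXn horner_exp hornerD hornerN hornerX hornerC. Qed.

Lemma HH_at0 n : (HH n).[0] = 1.
Proof.
rewrite /HH horner_sum big_ord_recl big1 => [|k _]; rewrite hornerT.
  by rewrite cc0 !expr0 subr0 expr1n !mul1r addr0.
by rewrite /= expr0n /= mul0r mulr0.
Qed.

Lemma HH_at1 n : (HH n).[1] = (-1) ^+ n / (n`!)%:R.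
Proof.
rewrite /HH horner_sum big_ord_recr big1 => [|k _] /=; rewrite hornerT.
  by rewrite subnn expr0 expr1n mulr1 mulr1 add0r /cc binn mul1r.
rewrite subrr expr0n.
have -> : (n - k == 0)%N = false by have := ltn_ord k; lia.
by rewrite mulr0 mulr0.
Qed.

End Alg.

Lemma fun_choice_nat (T : Type) (P : nat -> T -> Prop) (d : T) n :
  (forall j, (j < n)%N -> exists w, P j w) ->
  exists z : nat -> T, forall j, (j < n)%N -> P j (z j).
Proof.
elim: n => [|n IH] H; first by exists (fun _ => d).
have [z hz] : exists z : nat -> T, forall j, (j < n)%N -> P j (z j).
  by apply: IH => j hj; apply: H; lia.
have [w hw] := H n (ltnSn n).
exists (fun j => if j == n then w else z j) => j hj.
case: eqP => [->//|ne]; apply: hz; lia.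
Qed.

Lemma count_ge j n : count (fun i => (j <= i)%N) (iota 0 n) = (n - j)%N.
Proof.
elim: n => [//|n IH]; rewrite -addn1 iotaD count_cat IH /= add0n addn0.
case: (leqP j n) => h /=; lia.
Qed.

Lemma sqr_sign (R : comPzRingType) m : (-1) ^+ m * (-1) ^+ m = 1 :> R.
Proof. by rewrite -exprMn mulN1r opprK expr1n. Qed.

Section Ana.
Variable R : rcfType.
Local Notation Q := (@HH R).

Lemma size_Q n : (size (Q n) <= n.+1)%N.
Proof. by rewrite HH_QL; exact: size_poly. Qed.

Lemma Q_neq0 n : Q n != 0.
Proof. by apply/eqP => h; have := HH_at0 R n; rewrite h horner0 => /eqP; rewrite eq_sym oner_eq0. Qed.

Lemma sign_prod (s : seq R) z : z \notin s ->
  0 < (-1) ^+ (count (fun w => z < w) s) * \prod_(w <- s) (z - w).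
Proof.
elim: s => [|w s IH]; first by rewrite big_nil expr0 mulr1 ltr01.
rewrite in_cons negb_or => /andP[zw zs] /=; rewrite big_cons exprD mulrACA.
apply: mulr_gt0; last exact: IH.
case: (ltgtP z w) zw => [h|h|->]; rewrite ?eqxx //= => _.
- by rewrite expr1 mulN1r oppr_gt0 subr_lt0.
- by rewrite expr0 mul1r subr_gt0.
Qed.

Lemma Q_fact n (x : nat -> R) :
  (forall i, (i < n)%N -> root (Q n) (x i)) ->
  (forall i j, (i < j < n)%N -> x i < x j) ->
  Q n = lead_coef (Q n) *: \prod_(w <- mkseq x n) ('X - w%:P).
Proof.
move=> hr hm.
have U : uniq (mkseq x n).
  rewrite /mkseq map_inj_in_uniq ?iota_uniq // => i j; rewrite !mem_iota /= => hi hj e.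
  apply/eqP; apply: contraT => ne; case: (ltngtP i j) ne => // h _.
    by have := hm i j ltac:(lia); rewrite e ltxx.
  by have := hm j i ltac:(lia); rewrite e ltxx.
have A : all (root (Q n)) (mkseq x n).
  by apply/allP => w /mapP[i]; rewrite mem_iota => /andP[_ hi] ->; apply: hr.
apply: all_roots_prod_XsubC => //; last by rewrite uniq_rootsE.
have := max_ring_poly_roots (Q_neq0 n) A; rewrite uniq_rootsE U size_mkseq => /(_ isT) h.
by apply/eqP; rewrite eqn_leq size_Q h.
Qed.

Lemma Q_horner_fact n (x : nat -> R) t :
  (forall i, (i < n)%N -> root (Q n) (x i)) ->
  (forall i j, (i < j < n)%N -> x i < x j) ->
  (Q n).[t] = lead_coef (Q n) * \prod_(w <- mkseq x n) (t - w).
Proof.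
move=> hr hm; rewrite {1}(Q_fact hr hm) hornerZ horner_prod.
by under eq_bigr do rewrite hornerXsubC.
Qed.

Lemma step n (x : nat -> R) :
  (forall i, (i < n)%N -> [/\ 0 < x i < 1, root (Q n) (x i) & 0 < (-1) ^+ i * (Q n.-1).[x i]]) ->
  (forall i j, (i < j < n)%N -> x i < x j) ->
  exists z : nat -> R,
   [/\ (forall i, (i < n.+1)%N -> [/\ 0 < z i < 1, root (Q n.+1) (z i) & 0 < (-1) ^+ i * (Q n).[z i]]),
       (forall i j, (i < j < n.+1)%N -> z i < z j) &
       (forall i, (i < n)%N -> z i < x i < z i.+1)].
Proof.
move=> hx hm.
pose p j := if j == 0%N then 0 else if (j <= n)%N then x j.-1 else 1.
have p0 : p 0%N = 0 by [].
have pn : p n.+1 = 1 by rewrite /p /= ltnn.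
have pS : forall i, (i < n)%N -> p i.+1 = x i by move=> i hi; rewrite /p /= hi.
have xp : forall i, (i < n)%N -> 0 < x i by move=> i /hx [/andP[]].
have x1 : forall i, (i < n)%N -> x i < 1 by move=> i /hx [/andP[]].
have xr : forall i, (i < n)%N -> root (Q n) (x i) by move=> i /hx [].
have xs : forall i, (i < n)%N -> 0 < (-1) ^+ i * (Q n.-1).[x i] by move=> i /hx [].
have pmono : forall i j, (i < j <= n.+1)%N -> p i < p j.
  move=> i j hij.
  have [ejn|nejn] := eqVneq j n.+1.
    rewrite ejn pn; case: i hij => [|i] hij; first by rewrite p0 ltr01.
    by rewrite pS ?x1 //; lia.
  case: j hij nejn => [|j] hij nejn; first lia.
  rewrite pS; last lia.
  case: i hij => [|i] hij; first by rewrite p0 xp //; lia.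
  rewrite pS; last lia.
  apply: hm; lia.
have pmono_le : forall i j, (i <= j <= n.+1)%N -> p i <= p j.
  move=> i j hij; case: (ltngtP i j) => h.
  - by apply: ltW; apply: pmono; lia.
  - lia.
  - by rewrite h.
have rec_eval : forall y, root (Q n) y ->
    (n.+1)%:R * (Q n.+1).[y] = - (n%:R * ((1 - y) ^+ 2 * (Q n.-1).[y])).
  move=> y /rootP hy; have := congr1 (horner^~ y) (HH_rec_all R n).
  rewrite /= hornerZ => ->.
  by rewrite hornerD hornerN hornerM hy mulr0 add0r hornerZ hornerM horner_exp hornerD hornerN hornerX hornerC.
have psign : forall j, (j <= n.+1)%N -> 0 < (-1) ^+ j * (Q n.+1).[p j].
  move=> j hj.
  have [->|ne] := eqVneq j n.+1.
    rewrite pn HH_at1 mulrA sqr_sign mul1r invr_gt0 ltr0n; exact: fact_gt0.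
  case: j hj ne => [|i] hi ne; first by rewrite p0 expr0 mul1r HH_at0 ltr01.
  have hin : (i < n)%N by lia.
  rewrite pS //.
  have E : (n.+1)%:R * ((-1) ^+ i.+1 * (Q n.+1).[x i]) =
      n%:R * (1 - x i) ^+ 2 * ((-1) ^+ i * (Q n.-1).[x i]).
    by rewrite mulrCA rec_eval ?xr // exprS; ring.
  have : 0 < (n.+1)%:R * ((-1) ^+ i.+1 * (Q n.+1).[x i]).
    rewrite E; apply: mulr_gt0; last exact: xs.
    apply: mulr_gt0; first by rewrite ltr0n; lia.
    by apply: exprn_gt0; rewrite subr_gt0 x1.
  by rewrite pmulr_rgt0 // ltr0n.
have ivt : forall j, (j < n.+1)%N -> exists w, (p j < w < p j.+1) /\ root (Q n.+1) w.
  move=> j hj.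
  pose q := ((-1) ^+ j.+1) *: Q n.+1.
  have qa : q.[p j] < 0.
    by rewrite hornerZ exprS mulN1r mulNr oppr_lt0; apply: psign; lia.
  have qb : 0 < q.[p j.+1] by rewrite hornerZ; apply: psign.
  have [w /andP[h1 h2] hr] := @poly_ivt R q (p j) (p j.+1) (ltW (pmono j j.+1 ltac:(lia)))
    (introT andP (conj (ltW qa) (ltW qb))).
  have nz : (-1) ^+ j.+1 != 0 :> R by rewrite expf_neq0 // oppr_eq0 oner_eq0.
  exists w; split; last by rewrite -(rootZ _ _ nz).
  move/rootP: hr => hr.
  rewrite !lt_neqAle h1 h2 !andbT; apply/andP; split.
    by apply/eqP => e; move: qa; rewrite e hr ltxx.
  by apply/eqP => e; move: qb; rewrite -e hr ltxx.
have [z hz] := fun_choice_nat 0 ivt.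
exists z.
have zl : forall i, (i < n.+1)%N -> p i < z i by move=> i /hz [/andP[]].
have zr : forall i, (i < n.+1)%N -> z i < p i.+1 by move=> i /hz [/andP[]].
have zroot : forall i, (i < n.+1)%N -> root (Q n.+1) (z i) by move=> i /hz [].
split.
- move=> i hi; split; last first.
  + have cmp : forall k, (k < n)%N -> ((i <= k)%N -> z i < x k) /\ ((k < i)%N -> x k < z i).
      move=> k hk; split => h.
        by rewrite -pS //; apply: (lt_le_trans (zr i hi)); apply: pmono_le; lia.
      by rewrite -pS //; apply: (le_lt_trans _ (zl i hi)); apply: pmono_le; lia.
    have zn : z i \notin mkseq x n.
      apply/negP => /mapP[k]; rewrite mem_iota => /andP[_ hk] e.
      case: (leqP i k) => h.
        by have := (cmp k hk).1 h; rewrite e ltxx.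
      by have := (cmp k hk).2 h; rewrite e ltxx.
    have cnt : count (fun w => z i < w) (mkseq x n) = (n - i)%N.
      rewrite /mkseq count_map -(count_ge i n); apply: eq_in_count => k.
      rewrite mem_iota => /andP[_ hk] /=.
      case: (leqP i k) => h; first by rewrite (cmp k hk).1.
      by apply/negbTE; rewrite -leNgt; apply: ltW; apply: (cmp k hk).2.
    have B0 := sign_prod zn; rewrite cnt in B0.
    have c0 : 0 < lead_coef (Q n) * (-1) ^+ n.
      have zn0 : 0 \notin mkseq x n.
        apply/negP => /mapP[k]; rewrite mem_iota => /andP[_ hk] e.
        by have := xp k hk; rewrite -e ltxx.
      have cnt0 : count (fun w => 0 < w) (mkseq x n) = n.
        rewrite /mkseq count_map -[RHS](size_iota 0 n) -count_predT.
        apply: eq_in_count => k; rewrite mem_iota => /andP[_ hk] /=.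
        exact: xp.
      have B := sign_prod zn0; rewrite cnt0 in B.
      have E := Q_horner_fact 0 xr hm; rewrite HH_at0 in E.
      rewrite -(pmulr_lgt0 _ B).
      set P0 := \prod_(w <- _) _ in B E *.
      have -> : lead_coef (Q n) * (-1) ^+ n * ((-1) ^+ n * P0) =
          (lead_coef (Q n) * P0) * ((-1) ^+ n * (-1) ^+ n) by ring.
      by rewrite -E sqr_sign mul1r ltr01.
    rewrite (Q_horner_fact (z i) xr hm).
    set P := \prod_(w <- _) _ in B0 *.
    have en : (-1) ^+ n = (-1) ^+ i * (-1) ^+ (n - i) :> R.
      by rewrite -exprD subnKC //; lia.
    rewrite en in c0.
    have -> : (-1) ^+ i * (lead_coef (Q n) * P) =
      (lead_coef (Q n) * ((-1) ^+ i * (-1) ^+ (n - i))) * ((-1) ^+ (n - i) * P).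
      apply/eqP; rewrite -subr_eq0.
      have -> : (-1) ^+ i * (lead_coef (Q n) * P) -
        (lead_coef (Q n) * ((-1) ^+ i * (-1) ^+ (n - i))) * ((-1) ^+ (n - i) * P) =
        (-1) ^+ i * (lead_coef (Q n) * P) * (1 - (-1) ^+ (n - i) * (-1) ^+ (n - i)) by ring.
      by rewrite sqr_sign subrr mulr0.
    exact: mulr_gt0.
  + exact: zroot.
  + apply/andP; split.
      by apply: (le_lt_trans _ (zl i hi)); rewrite -p0; apply: pmono_le; lia.
    by apply: (lt_le_trans (zr i hi)); rewrite -pn; apply: pmono_le; lia.
- move=> i j hij; apply: (lt_le_trans (zr i _)); first lia.
  apply: (le_trans _ (ltW (zl j _))); last lia.
  apply: pmono_le; lia.
- move=> i hi; rewrite -pS //; apply/andP; split; first by apply: zr; lia.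
  apply: zl; lia.
Qed.

Lemma inv_all n : exists x : nat -> R,
  (forall i, (i < n)%N -> [/\ 0 < x i < 1, root (Q n) (x i) & 0 < (-1) ^+ i * (Q n.-1).[x i]]) /\
  (forall i j, (i < j < n)%N -> x i < x j).
Proof.
elim: n => [|n [x [hx hm]]]; first by exists (fun _ => 0); split => [i|i j]; lia.
by have [z [hz hzm _]] := step hx hm; exists z.
Qed.
End Ana.

Lemma mkseq_uniq_mono (R : realDomainType) (x : nat -> R) n :
  (forall i j, (i < j < n)%N -> x i < x j) -> uniq (mkseq x n).
Proof.
move=> hm; rewrite /mkseq map_inj_in_uniq ?iota_uniq // => i j; rewrite !mem_iota /= => hi hj e.
apply/eqP; apply: contraT => ne; case: (ltngtP i j) ne => // h _.
  by have := hm i j ltac:(lia); rewrite e ltxx.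
by have := hm j i ltac:(lia); rewrite e ltxx.
Qed.

Lemma simple_root (F : fieldType) (s : seq F) c w : c != 0 -> uniq s -> w \in s ->
  ~~ root (c *: \prod_(v <- s) ('X - v%:P))^`() w.
Proof.
move=> c0 us ws; rewrite (big_rem w) //= derivZ derivM derivXsubC mul1r rootZ //.
rewrite rootE hornerD hornerM hornerXsubC subrr mul0r addr0 horner_prod prodf_seq_neq0.
apply/allP => v hv /=; rewrite hornerXsubC subr_eq0; apply: contraTneq hv => <-.
by rewrite mem_rem_uniqF.
Qed.

Lemma map_QLg_gen (F K : numFieldType) (f : {rmorphism F -> K}) n :
  map_poly f (QLg F n) = QLg K n.
Proof.
apply/polyP => r; rewrite coef_map !coef_poly; case: ifP => _; last exact: rmorph0.
rewrite /= !rmorphM rmorph_nat rmorphXn rmorphN1 rmorph_sum /=; congr (_ * _ * _).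
by apply: eq_bigr => l _; rewrite fmorph_div !rmorph_nat.
Qed.

Lemma map_QLg n : map_poly algRval (QLg algR n) = QLg algC n.
Proof. exact: map_QLg_gen. Qed.

Lemma QL_map n : QL n = map_poly algRval (HH algR n).
Proof. by rewrite HH_QL map_QLg. Qed.

Lemma desc m (y : nat -> algR) :
  (forall i, (i < m)%N -> root (HH algR m) (y i)) ->
  (forall i j, (i < j < m)%N -> y i < y j) ->
  (forall t : algC, root (QL m) t <-> t \in map algRval (mkseq y m)) /\
  (forall t, t \in map algRval (mkseq y m) -> ~~ root (QL m)^`() t).
Proof.
move=> hr hm.
have F := Q_fact hr hm.
have c0 : lead_coef (HH algR m) != 0 by rewrite lead_coef_eq0 Q_neq0.
split.
  move=> t; rewrite QL_map F map_polyZ map_prod_XsubC rootZ ?fmorph_eq0 //.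
  by rewrite -(big_map algRval xpredT (fun v => 'X - v%:P)) root_prod_XsubC.
move=> t /mapP[w hw ->].
rewrite QL_map deriv_map fmorph_root F.
apply: simple_root => //; exact: mkseq_uniq_mono.
Qed.

Lemma nth_mapmk (y : nat -> algR) m i : (i < m)%N ->
  (map algRval (mkseq y m))`_i = algRval (y i).
Proof. by move=> h; rewrite (nth_map (0 : algR)) ?size_mkseq // nth_mkseq. Qed.

Unset Implicit Arguments.

Theorem theorem5p3 (n : nat) :
  (forall z : algC, root (QL n) z -> z \is Num.real /\ 0 < z < 1) /\
  exists (s r : seq algC),
    size s = n.+1 /\ size r = n /\
    (forall x, root (QL n.+1) x <-> x \in s) /\
    (forall x, root (QL n) x <-> x \in r) /\
    (forall x, x \in s -> ~~ root (QL n.+1)^`() x) /\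
    (forall x, x \in r -> ~~ root (QL n)^`() x) /\
    (forall i : nat, (i < n)%N -> s`_i < r`_i < s`_i.+1).
Proof.
have [x [hx hm]] := inv_all algR n.
have [z [hz hzm hint]] := step hx hm.
have xr : forall i, (i < n)%N -> root (HH algR n) (x i) by move=> i /hx [].
have zr : forall i, (i < n.+1)%N -> root (HH algR n.+1) (z i) by move=> i /hz [].
have [Dx Sx] := desc xr hm.
have [Dz Sz] := desc zr hzm.
split.
  move=> t /Dx /mapP[w /mapP[i]]; rewrite mem_iota => /andP[_ hi] -> ->.
  split; first exact: algRvalP.
  by have [h _ _] := hx i hi; exact: h.
exists (map algRval (mkseq z n.+1)), (map algRval (mkseq x n)).
rewrite !size_map ?size_mkseq ?size_iota; do 6!(split => //).
move=> i hi.
rewrite !nth_mapmk //; [exact: hint | lia].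
Qed.
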